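(* There are constants $C_7$ and $D$ (depending only on $r$) and, for each $\eta>0$, a constant $\varepsilon_5(\eta)>0$ such that for every $\eta>0$, all large enough $n$, every $m\le\varepsilon_5(\eta)n$ and every $U\subset V_n$ with $|U|=m$, $$\mathbb P\big(|\partial U|\le(r-2-\eta)|U|\big)\le C_7\exp\big[-(1+\eta/4)\,m\log(n/m)+D m\big].$$
   Context: Fix an integer $r\ge3$, let $V_n=\{1,\dots,n\}$ with $rn$ even, and let $\mathbb P$ be the law of the random multigraph $G_n$ on $V_n$ obtained by giving each vertex $r$ half-edges and pairing all $rn$ half-edges uniformly at random. Write $y\sim x$ if $y$ and $x$ are joined by an edge of $G_n$. For $U\subset V_n$, $\partial U:=\{y\in U^c: y\sim x\text{ for some }x\in U\}$. *)

(* Defs.v *)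
From mathcomp Require Import all_boot.
From Stdlib Require Import Reals.

Set Implicit Arguments.
Unset Strict Implicit.
Unset Printing Implicit Defensive.

(* Configuration model: vertex set V_n = 'I_n, each vertex x carries r
   half-edges (x, i), i : 'I_r. *)
Definition halfedge (n r : nat) : finType := ('I_n * 'I_r)%type.

Definition is_pairing (n r : nat) (f : {ffun halfedge n r -> halfedge n r}) : bool :=
  [forall h, (f (f h) == h) && (f h != h)].

Definition pairings (n r : nat) : {set {ffun halfedge n r -> halfedge n r}} :=
  [set f | is_pairing f].

Definition adj (n r : nat) (f : {ffun halfedge n r -> halfedge n r}) (y x : 'I_n) : bool :=
  [exists h : halfedge n r, (h.1 == x) && ((f h).1 == y)].

Definition boundary (n r : nat) (f : {ffun halfedge n r -> halfedge n r})
  (U : {set 'I_n}) : {set 'I_n} :=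
  [set y | (y \notin U) && [exists x in U, adj f y x]].

Definition prob (n r : nat) (E : pred {ffun halfedge n r -> halfedge n r}) : R :=
  (INR #|[set f in pairings n r | E f]| / INR #|pairings n r|)%R.

(* Main.v *)
Require Import Defs.
From mathcomp Require Import all_boot.
From Stdlib Require Import Reals.
From mathcomp Require all_order all_algebra Rstruct.
From mathcomp Require Import zify.
From Stdlib Require Import Lra Lia Psatz.
From mathcomp Require Import all_boot zify.

Set Implicit Arguments.
Unset Strict Implicit.
Unset Printing Implicit Defensive.

Notation PF n r := {ffun halfedge n r -> halfedge n r}.

Lemma pairingP n r (f : PF n r) : f \in pairings n r ->
  (forall h, f (f h) = h) /\ (forall h, f h != h).
Proof.
rewrite inE => /forallP H; split => h; by case/andP: (H h) => /eqP.
Qed.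

Definition Fset n r (ps : seq (halfedge n r * halfedge n r)) : {set PF n r} :=
  [set f in pairings n r | all (fun p => f p.1 == p.2) ps].

Definition used n r (ps : seq (halfedge n r * halfedge n r)) :=
  map fst ps ++ map snd ps.

Lemma Fset_nil n r : Fset (@nil (halfedge n r * halfedge n r)) = pairings n r.
Proof. by apply/setP => f; rewrite inE andbT. Qed.

Lemma fx_notin n r ps (f : PF n r) x : f \in Fset ps -> x \notin used ps ->
  (f x \notin used ps) && (f x != x).
Proof.
rewrite inE => /andP[fP /allP Hps] xu.
have [ff fn] := pairingP fP.
rewrite fn andbT; apply/negP; rewrite mem_cat => /orP[] /mapP[p pin e].
- move/eqP: (Hps p pin) => e2.
  move: xu; rewrite mem_cat negb_or => /andP[_ /negP]; apply.
  apply/mapP; exists p => //; by rewrite -e2 -e ff.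
- move/eqP: (Hps p pin) => e2.
  move: xu; rewrite mem_cat negb_or => /andP[/negP + _]; apply.
  apply/mapP; exists p => //.
  by rewrite -(ff x) e -e2 ff.
Qed.

Definition sw (T : eqType) (z z' h : T) := if h == z then z' else if h == z' then z else h.

Lemma swK (T : eqType) (z z' : T) : involutive (sw z z').
Proof.
move=> h; rewrite /sw.
case: (eqVneq h z) => [->|hz].
  rewrite eqxx; case: (eqVneq z' z) => [->|]; by rewrite ?eqxx.
case: (eqVneq h z') => [->|hz']; first by rewrite eqxx.
by rewrite (negPf hz) (negPf hz').
Qed.

Lemma sw_id (T : eqType) (z z' h : T) : h != z -> h != z' -> sw z z' h = h.
Proof. by rewrite /sw => /negPf -> /negPf ->. Qed.

Definition conjf n r (z z' : halfedge n r) (f : PF n r) : PF n r :=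
  [ffun h : halfedge n r => (sw z z' (f (sw z z' h)) : halfedge n r)].

Lemma conjfE n r (z z' : halfedge n r) f h : conjf z z' f h = sw z z' (f (sw z z' h)).
Proof. by rewrite /conjf ffunE. Qed.

Lemma conjfK n r (z z' : halfedge n r) : involutive (conjf z z').
Proof. by move=> f; apply/ffunP => h; rewrite !conjfE !swK. Qed.

Lemma conjf_pairing n r (z z' : halfedge n r) f :
  f \in pairings n r -> conjf z z' f \in pairings n r.
Proof.
move=> /pairingP [ff fn]; rewrite inE; apply/forallP => h.
rewrite !conjfE swK ff swK eqxx /=.
case: (eqVneq (sw z z' (f (sw z z' h))) h) => // e.
have := congr1 (sw z z') e; rewrite swK => e2.
by move: (fn (sw z z' h)); rewrite e2 eqxx.
Qed.

Lemma conjf_F n r ps (x z z' : halfedge n r) f :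
  z \notin used ps -> z' \notin used ps -> x != z -> x != z' ->
  f \in Fset ((x, z) :: ps) -> conjf z z' f \in Fset ((x, z') :: ps).
Proof.
move=> zu z'u xz xz'; rewrite inE => /andP[fP /= /andP[/eqP fx Hps]].
rewrite inE (conjf_pairing _ _ fP) /= conjfE (sw_id xz xz') fx /sw eqxx eqxx /=.
apply/allP => p pin; move/allP: Hps => /(_ p pin) /eqP e.
have p1u : p.1 \in used ps by rewrite mem_cat map_f.
have p2u : p.2 \in used ps by rewrite mem_cat map_f ?orbT.
have ne : forall w, w \notin used ps -> forall y, y \in used ps -> y != w.
  by move=> w wu y yu; apply/eqP => eyw; move: wu; rewrite -eyw yu.
by rewrite conjfE (sw_id (ne _ zu _ p1u) (ne _ z'u _ p1u)) e (sw_id (ne _ zu _ p2u) (ne _ z'u _ p2u)).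
Qed.

Lemma card_F_eq n r ps (x z z' : halfedge n r) :
  z \notin used ps -> z' \notin used ps -> x != z -> x != z' ->
  #|Fset ((x, z) :: ps)| = #|Fset ((x, z') :: ps)|.
Proof.
have H : forall z z', z \notin used ps -> z' \notin used ps -> x != z -> x != z' ->
  #|Fset ((x, z) :: ps)| <= #|Fset ((x, z') :: ps)|.
  move=> a b au bu xa xb.
  rewrite -(card_imset _ (can_inj (conjfK a b))).
  apply: subset_leq_card; apply/subsetP => g /imsetP[f fin ->].
  exact: conjf_F.
move=> *; apply/eqP; rewrite eqn_leq !H //.
Qed.

Lemma step_card n r ps (x z : halfedge n r) :
  uniq (used ps) -> x \notin used ps -> z \notin used ps -> x != z ->
  #|Fset ((x, z) :: ps)| * (#|halfedge n r| - size (used ps) - 1) = #|Fset ps|.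
Proof.
move=> uu xu zu xz.
pose Zs := [set z' : halfedge n r | (z' \notin used ps) && (z' != x)].
have cZ : #|Zs| = #|halfedge n r| - size (used ps) - 1.
  have -> : Zs = ~: (x |: [set y | y \in used ps]).
    by apply/setP => y; rewrite !inE negb_or andbC.
  have := cardsC (x |: [set y | y \in used ps]).
  rewrite cardsU1 inE (negPf xu) cardsE (card_uniqP uu) /=.
  move=> <-; lia.
rewrite -cZ mulnC -sum_nat_const -[#|Fset ps|]sum1_card.
rewrite (partition_big (fun f : PF n r => f x) (fun z' => z' \in Zs)); last first.
  move=> f fin; have /andP[a b] := fx_notin fin xu; by rewrite inE a.
rewrite /=. apply: eq_bigr => z' z'in.
have [z'u z'x] : z' \notin used ps /\ x != z'.
  by move: z'in; rewrite inE eq_sym => /andP[].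
rewrite (card_F_eq zu z'u xz z'x) -sum1_card.
apply: eq_bigl => f; rewrite !inE /=.
by case: (is_pairing f); case: (f x == z'); case: (all _ ps).
Qed.

Lemma used_cons n r ps (x z : halfedge n r) :
  perm_eq (used ((x, z) :: ps)) (x :: z :: used ps).
Proof. by rewrite /used /= perm_cons -cat1s perm_catCA. Qed.

Lemma count_into n r (S : {set halfedge n r}) (xs : seq (halfedge n r)) :
  forall ps, uniq xs -> uniq (used ps) -> (forall x, x \in xs -> x \notin used ps) ->
  #|[set f in Fset ps | all (fun x => (f x \in S) && (f x \notin xs)) xs]| *
    (#|halfedge n r| - size (used ps) - 2 * size xs) ^ size xs
  <= #|S| ^ size xs * #|Fset ps|.
Proof.
elim: xs => [|x xs IH] ps uxs uu xsu.
  rewrite !expn0 mul1n muln1; apply: subset_leq_card; apply/subsetP => f.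
  by rewrite inE => /andP[].
move: uxs => /= /andP[xnxs uxs].
have xu : x \notin used ps by apply: xsu; rewrite inE eqxx.
set K := #|halfedge n r| - size (used ps) - 2 * size (x :: xs).
set A := [set f in Fset ps | _].
pose Zs := [set z in S | [&& z \notin used ps, z != x & z \notin xs]].
have hA : #|A| = \sum_(z in Zs) #|[set f in A | f x == z]|.
  rewrite -sum1_card (partition_big (fun f : PF n r => f x) (fun z => z \in Zs)) /=.
    apply: eq_bigr => z _; rewrite -sum1_card; apply: eq_bigl => f.
    by rewrite !inE.
  move=> f; rewrite inE => /andP[fin /= /andP[/andP[fxS]]].
  rewrite inE negb_or => /andP[fxx fxxs] _.
  have /andP[a b] := fx_notin fin xu.
  by rewrite inE fxS a fxxs fxx.
have piece : forall z, z \in Zs ->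
  #|[set f in A | f x == z]| * K ^ size xs <= #|S| ^ size xs * #|Fset ((x, z) :: ps)|.
  move=> z; rewrite inE => /and4P[zS zu zx zxs].
  have uu' : uniq (used ((x, z) :: ps)).
    by rewrite (perm_uniq (used_cons _ _ _)) /= inE negb_or xu zu eq_sym zx uu.
  have xsu' : forall y, y \in xs -> y \notin used ((x, z) :: ps).
    move=> y yin; rewrite (perm_mem (used_cons _ _ _)) !inE !negb_or xsu ?inE ?yin ?orbT //.
    rewrite andbT; apply/andP; split; apply/eqP => e; subst y.
      by move: xnxs; rewrite yin.
    by move: zxs; rewrite yin.
  have := IH ((x, z) :: ps) uxs uu' xsu'.
  rewrite (perm_size (used_cons _ _ _)) /=.
  have -> : #|halfedge n r| - (size (used ps)).+2 - 2 * size xs = K by rewrite /K /=; lia.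
  apply: leq_trans; rewrite leq_mul2r; apply/orP; right.
  apply: subset_leq_card; apply/subsetP => f; rewrite !inE.
  case/andP => /andP[/andP[fP fps] /= /andP[/andP[_ _] fxs]] /eqP fx.
  rewrite fP fx eqxx fps /=.
  apply/allP => y yin; move/allP: fxs => /(_ y yin) /andP[-> ].
  by rewrite inE negb_or => /andP[_ ->].
rewrite hA big_distrl /=.
apply: (@leq_trans (\sum_(z in Zs) #|S| ^ size xs * #|Fset ps|)).
  apply: leq_sum => z zin.
  rewrite expnS mulnA mulnAC.
  have := leq_mul (piece z zin) (_ : K <= #|halfedge n r| - size (used ps) - 1).
  move=> /(_ ltac:(rewrite /K /=; lia)).
  move: zin; rewrite inE => /and4P[zS zu zx zxs].
  by move=> H; apply: (leq_trans H); rewrite -mulnA step_card // eq_sym.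
rewrite sum_nat_const mulnA leq_mul2r; apply/orP; right.
rewrite expnS leq_mul2r; apply/orP; right.
apply: subset_leq_card; apply/subsetP => z; rewrite inE; by case/andP.
Qed.

Lemma G_bound n r (X S : {set halfedge n r}) :
  #|[set f in pairings n r | [forall x in X, (f x \in S) && (f x \notin X)]]| *
    (#|halfedge n r| - 2 * #|X|) ^ #|X| <= #|S| ^ #|X| * #|pairings n r|.
Proof.
have := @count_into n r S (enum X) [::] (enum_uniq _) isT (fun _ _ => isT).
rewrite /Fset /= -cardE subn0.
have -> : [set f in pairings n r | true] = pairings n r by apply/setP => f; rewrite inE andbT.
apply: leq_trans; rewrite leq_mul2r; apply/orP; right.
apply: subset_leq_card; apply/subsetP => f; rewrite !inE => /andP[-> /forallP H].
apply/allP => x; rewrite mem_enum => xX; move: (H x); rewrite xX mem_enum; done.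
Qed.

Definition AU n r (U : {set 'I_n}) : {set halfedge n r} := [set h | h.1 \in U].
Definition SB n r (U B : {set 'I_n}) : {set halfedge n r} := [set h | h.1 \in U :|: B].
Definition Of n r (f : PF n r) U : {set halfedge n r} :=
  [set h in AU r U | (f h).1 \notin U].
Definition I1 n r (f : PF n r) U : {set halfedge n r} :=
  [set h in AU r U | ((f h).1 \in U) && (enum_rank h < enum_rank (f h))].
Definition Xf n r (f : PF n r) U := Of f U :|: I1 f U.

Lemma card_AU n r (U : {set 'I_n}) : #|AU r U| = #|U| * r.
Proof.
have -> : AU r U = setX U [set: 'I_r] by apply/setP => h; rewrite !inE andbT.
by rewrite cardsX cardsT card_ord.
Qed.

Lemma Xf_sub n r (f : PF n r) U : Xf f U \subset AU r U.
Proof. by apply/subsetP => h; rewrite !inE => /orP[] /andP[]. Qed.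

Lemma struct1 n r (f : PF n r) U : f \in pairings n r ->
  forall x, x \in Xf f U -> (f x \in SB r U (boundary f U)) && (f x \notin Xf f U).
Proof.
move=> /pairingP [ff fn] x; rewrite !inE ff => /orP[] /andP[xU].
- move=> fxU; rewrite (negPf fxU) /= andbT.
  apply/existsP; exists x.1; rewrite xU /=; apply/existsP; exists x; by rewrite !eqxx.
- case/andP=> fxU lt; rewrite fxU xU /=.
  by rewrite ltnNge ltnW.
Qed.

Lemma struct2 n r (f : PF n r) (U : {set 'I_n}) : f \in pairings n r ->
  #|U| * r + #|boundary f U| <= 2 * #|Xf f U|.
Proof.
move=> fP; have [ff fn] := pairingP fP.
pose I := [set h in AU r U | (f h).1 \in U].
have hB : #|boundary f U| <= #|Of f U|.
  apply: (leq_trans _ (leq_imset_card (fun h => (f h).1) _)).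
  apply: subset_leq_card; apply/subsetP => y; rewrite inE => /andP[yU /existsP[x0 /andP[x0U]]].
  case/existsP => h /andP[/eqP h1 /eqP fh1].
  apply/imsetP; exists h => //; by rewrite !inE h1 x0U fh1 yU.
have hA : #|AU r U| = #|Of f U| + #|I|.
  rewrite -(cardsID [set h | (f h).1 \in U] (AU r U)) addnC.
  have -> : AU r U :&: [set h | (f h).1 \in U] = I by apply/setP => h; rewrite !inE.
  have -> : AU r U :\: [set h | (f h).1 \in U] = Of f U by apply/setP => h; rewrite !inE andbC.
  done.
have hI : #|I| <= 2 * #|I1 f U|.
  apply: (leq_trans (subset_leq_card (_ : I \subset I1 f U :|: f @: I1 f U))).
    apply/subsetP => h; rewrite !inE => /andP[hU fhU].
    case: (ltngtP (enum_rank h) (enum_rank (f h))) => [lt|gt|e].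
    - by rewrite hU fhU.
    - apply/orP; right; apply/imsetP; exists (f h); last by rewrite ff.
      by rewrite !inE fhU ff hU gt.
    - by move: (fn h); rewrite -(enum_rank_inj (val_inj e)) eqxx.
  apply: (leq_trans (leq_card_setU _ _).1).
  by rewrite mul2n -addnn leq_add2l leq_imset_card.
have hX : #|Xf f U| = #|Of f U| + #|I1 f U|.
  rewrite /Xf cardsU.
  have -> : Of f U :&: I1 f U = set0.
    by apply/setP => h; rewrite !inE; case: ((f h).1 \in U); rewrite ?andbF.
  by rewrite cards0 subn0.
rewrite -card_AU hA hX; lia.
Qed.

Lemma card_cover (T I : finType) (A : {set T}) (K : pred I) (F : I -> {set T}) :
  A \subset \bigcup_(i | K i) F i -> #|A| <= \sum_(i | K i) #|F i|.
Proof.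
move/subset_leq_card/leq_trans; apply.
apply: (big_ind2 (fun (S : {set T}) m => #|S| <= m)) => //.
- by rewrite cards0.
- move=> S1 m1 S2 m2 h1 h2; apply: leq_trans (leq_card_setU _ _).1 _; exact: leq_add.
Qed.

Definition Xs n r (U B : {set 'I_n}) : {set {set halfedge n r}} :=
  [set X : {set halfedge n r} | (X \subset AU r U) && (#|U| * r + #|B| <= 2 * #|X|)].

Definition G n r (U B : {set 'I_n}) (X : {set halfedge n r}) : {set PF n r} :=
  [set f in pairings n r | [forall x in X, (f x \in SB r U B) && (f x \notin X)]].

Lemma union_bound n r (U : {set 'I_n}) (P : nat -> bool) :
  #|[set f in pairings n r | P #|boundary f U|]| <=
  \sum_(B : {set 'I_n} | P #|B|) \sum_(X in Xs r U B) #|G U B X|.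
Proof.
apply: (leq_trans (@card_cover _ _ _ (fun B : {set 'I_n} => P #|B|) (fun B => \bigcup_(X in Xs r U B) G U B X) _)).
  apply/subsetP => f; rewrite inE => /andP[fP PB].
  apply/bigcupP; exists (boundary f U) => //.
  apply/bigcupP; exists (Xf f U).
    by rewrite inE Xf_sub /= struct2.
  rewrite inE fP /=; apply/forallP => x; apply/implyP; exact: struct1.
apply: leq_sum => B _; exact: card_cover.
Qed.

Open Scope R_scope.
Lemma term_nat (r n m b k g s p : nat) :
  (3 <= r)%N -> (1 <= m)%N -> (4 * r * m <= n)%N -> (m + b <= r * m)%N ->
  (m * r + b <= 2 * k)%N -> (k <= m * r)%N -> (s <= (m + b) * r)%N ->
  (g * (n * r - 2 * k) ^ k <= s ^ k * p)%N ->
  (g * n ^ k <= (2 * r * m) ^ k * p)%N.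
Proof.
move=> r3 m1 nm mb hk1 hk2 hs hg.
set d := (n * r - 2 * k)%N.
have dpos : (0 < d)%N by rewrite /d; nia.
have sd : (s * n <= 2 * r * m * d)%N.
  have : (s * n <= r * r * m * n)%N by nia.
  move/leq_trans; apply.
  have : (r * (n - 2 * m) <= d)%N by rewrite /d; nia.
  move=> h; apply: (leq_trans _ (leq_mul (leqnn (2 * r * m)) h)).
  nia.
have : (g * n ^ k * d ^ k <= (2 * r * m) ^ k * p * d ^ k)%N.
  apply: (@leq_trans (s ^ k * p * n ^ k)).
    by rewrite mulnAC leq_mul2r hg orbT.
  rewrite mulnAC -expnMn [X in (_ <= X)%N]mulnAC -expnMn.
  rewrite leq_mul2r; apply/orP; right.
  elim: (k) => [|e IH]; first by rewrite !expn0.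
  by rewrite !expnS leq_mul.
by rewrite leq_mul2r expn_eq0 (gtn_eqF dpos).
Qed.

Lemma exp_le x y : x <= y -> exp x <= exp y.
Proof. intros H; destruct (Rle_lt_or_eq_dec _ _ H) as [h|h]; [left; apply exp_increasing; exact h| rewrite h; lra]. Qed.

Lemma ln_le' x y : 0 < x -> x <= y -> ln x <= ln y.
Proof. intros hx H; destruct (Rle_lt_or_eq_dec _ _ H) as [h|h]; [left; apply ln_increasing; lra| rewrite h; lra]. Qed.

Lemma INR_expn a e : INR (a ^ e)%N = INR a ^ e.
Proof. elim: e => [|e IH] //; by rewrite expnS mult_INR IH. Qed.

Lemma term_real (r n m b k g p : nat) (eta : R) :
  0 < eta -> (3 <= r)%N -> (1 <= m)%N -> (4 * r * m <= n)%N ->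
  INR b <= (INR r - 2 - eta) * INR m ->
  (m * r + b <= 2 * k)%N -> (k <= m * r)%N ->
  (g * n ^ k <= (2 * r * m) ^ k * p)%N ->
  INR g <= INR p * exp (INR (m * r) * ln (2 * INR r)
              - (1 + eta / 4) * INR m * ln (INR n / INR m)) * (INR m / INR n) ^ b.
Proof.
move=> eta0 r3 m1 nm hb hk1 hk2 hg.
have Rr : 3 <= INR r by have := le_INR 3 r (elimT leP r3); simpl; lra.
have Rm : 1 <= INR m by have := le_INR 1 m (elimT leP m1); simpl; lra.
have Rn : 4 * INR r * INR m <= INR n.
  have := le_INR _ _ (elimT leP nm); rewrite !mult_INR /=; lra.
have npos : 0 < INR n by nra.
have Hk1 : INR m * INR r + INR b <= 2 * INR k.
  have := le_INR _ _ (elimT leP hk1); rewrite plus_INR !mult_INR /=; lra.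
have Hk2 : INR k <= INR m * INR r.
  have := le_INR _ _ (elimT leP hk2); rewrite !mult_INR /=; lra.
have Hg : INR g * INR n ^ k <= (2 * INR r * INR m) ^ k * INR p.
  have := le_INR _ _ (elimT leP hg); rewrite !mult_INR !INR_expn !mult_INR /=; replace (1 + 1) with 2 by ring; done.
set rho := 2 * INR r * INR m / INR n.
have rhopos : 0 < rho by rewrite /rho; apply: Rdiv_lt_0_compat; nra.
have g1 : INR g <= INR p * rho ^ k.
  have npk : 0 < INR n ^ k by apply: pow_lt.
  rewrite /rho /Rdiv Rpow_mult_distr pow_inv.
  apply: (Rmult_le_reg_r (INR n ^ k)) => //.
  replace (INR p * ((2 * INR r * INR m) ^ k * / INR n ^ k) * INR n ^ k)
    with ((2 * INR r * INR m) ^ k * INR p); first lra.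
  field; lra.
have mpos : 0 < INR m by lra.
have Lpos : 0 < ln (2 * INR r).
  rewrite -ln_1; apply: ln_increasing; lra.
have T0 : 0 <= ln (INR n) - ln (INR m).
  have := @ln_le' (INR m) (INR n) mpos ltac:(nra); lra.
have Erho : rho ^ k = exp (INR k * (ln (2 * INR r) + ln (INR m) - ln (INR n))).
  rewrite -(exp_ln (rho ^ k)); last by apply: pow_lt.
  rewrite ln_pow // /rho /Rdiv !ln_mult ?ln_Rinv //; try nra.
  by apply: Rinv_0_lt_compat.
have Emn : (INR m / INR n) ^ b = exp (INR b * (ln (INR m) - ln (INR n))).
  rewrite -(exp_ln ((INR m / INR n) ^ b)); last by apply: pow_lt; apply: Rdiv_lt_0_compat.
  rewrite ln_pow; last by apply: Rdiv_lt_0_compat.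
  by rewrite /Rdiv ln_mult ?ln_Rinv //; apply: Rinv_0_lt_compat.
have Et : ln (INR n / INR m) = ln (INR n) - ln (INR m).
  by rewrite /Rdiv ln_mult ?ln_Rinv //; apply: Rinv_0_lt_compat.
apply: (Rle_trans _ _ _ g1).
rewrite Rmult_assoc; apply: Rmult_le_compat_l; first exact: pos_INR.
rewrite Erho Emn Et -exp_plus; apply: exp_le.
rewrite mult_INR.
move: Lpos T0; set L := ln (2 * INR r); set T := ln (INR n) - ln (INR m) => Lpos T0.
have -> : ln (INR m) - ln (INR n) = - T by rewrite /T; ring.
have -> : L + ln (INR m) - ln (INR n) = L - T by rewrite /T /L; ring. clearbody L T.
have h1 : 0 <= (INR m * INR r - INR k) * L by apply: Rmult_le_pos; lra.
have h2 : 0 <= (2 * INR k - INR m * INR r - INR b) * T by apply: Rmult_le_pos; lra.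
have h3 : 0 <= ((INR r - 2 - eta) * INR m - INR b) * T by apply: Rmult_le_pos; lra.
have h4 : 0 <= eta * INR m * T by apply: Rmult_le_pos => //; nra.
nra.
Qed.
Close Scope R_scope.

Module CPart.
Import all_order all_algebra Rstruct.
Import Order.TTheory GRing.Theory Num.Theory.
Local Open Scope ring_scope.

Lemma sum_subsets (n : nat) (x : R) : \sum_(B : {set 'I_n}) x ^+ #|B| = (x + 1) ^+ n.
Proof.
rewrite -[n in RHS]card_ord -prodr_const.
rewrite (@bigA_distr R 0 1 *%R +%R 'I_n (fun _ => x) (fun _ => 1)).
apply: eq_bigr => B _.
by rewrite -big_mkcond /= prodr_const.
Qed.

Lemma outer_bound n (T : finType) (P : pred {set 'I_n}) (Xs : {set 'I_n} -> {set T})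
  (g : {set 'I_n} -> T -> R) (y x : R) (K : nat) :
  0 <= y -> 0 <= x ->
  (forall B, P B -> #|Xs B| <= K)%N ->
  (forall B X, P B -> X \in Xs B -> g B X <= y * x ^+ #|B|) ->
  \sum_(B | P B) \sum_(X in Xs B) g B X <= K%:R * y * (x + 1) ^+ n.
Proof.
move=> y0 x0 hK hg.
apply: (@le_trans _ _ (\sum_(B | P B) (K%:R * (y * x ^+ #|B|)))).
  apply: ler_sum => B PB.
  apply: (@le_trans _ _ (\sum_(X in Xs B) (y * x ^+ #|B|))).
    by apply: ler_sum => X XB; apply: hg.
  rewrite sumr_const -[_ *+ #|Xs B|]mulr_natl ler_wpM2r ?mulr_ge0 ?exprn_ge0 //.
  by rewrite ler_nat hK.
apply: (@le_trans _ _ (\sum_(B : {set 'I_n}) (K%:R * (y * x ^+ #|B|)))).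
  rewrite [X in _ <= X](bigID P) /= lerDl.
  by apply: sumr_ge0 => B _; rewrite !mulr_ge0 ?exprn_ge0.
by rewrite -mulr_sumr -mulr_sumr sum_subsets mulrA.
Qed.

Lemma outer_final n (T : finType) (P : pred {set 'I_n}) (Xs : {set 'I_n} -> {set T})
  (g : {set 'I_n} -> T -> nat) (y x : R) (K : nat) :
  Rle 0 y -> Rle 0 x -> (forall B, P B -> #|Xs B| <= K)%N ->
  (forall B X, P B -> X \in Xs B -> Rle (INR (g B X)) (Rmult y (pow x #|B|))) ->
  Rle (INR (\sum_(B | P B) \sum_(X in Xs B) g B X)%N)
      (Rmult (Rmult (INR K) y) (pow (Rplus x 1) n)).
Proof.
move=> /RleP y0 /RleP x0 hK hg; apply/RleP.
rewrite INRE natr_sum RpowE RplusE !RmultE INRE.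
under eq_bigr => B _ do rewrite natr_sum.
apply: outer_bound => // B X PB XB.
by have /RleP := hg B X PB XB; rewrite INRE RmultE RpowE.
Qed.
End CPart.

Open Scope R_scope.

Lemma exp_pow' x k : exp x ^ k = exp (INR k * x).
Proof.
elim: k => [|k IH]; first by rewrite /= Rmult_0_l exp_0.
by rewrite S_INR [exp x ^ _]/= IH -exp_plus; congr exp; ring.
Qed.

Lemma ratio_le1 a b : (a <= b)%N -> INR a / INR b <= 1.
Proof.
move=> hab; have := le_INR _ _ (elimT leP hab) => h.
case: (Req_dec (INR b) 0) => hb.
  by rewrite hb /Rdiv Rinv_0 Rmult_0_r; lra.
have bpos : 0 < INR b by have := pos_INR b; lra.
apply: (Rmult_le_reg_r (INR b)) => //.
rewrite /Rdiv Rmult_assoc Rinv_l //; lra.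
Qed.

Lemma lemma5_core (r : nat) (eta : R) (n m : nat) (U : {set 'I_n}) :
  (3 <= r)%N -> 0 < eta -> INR m <= / (4 * INR r) * INR n -> #|U| = m ->
  prob (fun f : PF n r => if Rle_dec (INR #|boundary f U|) ((INR r - 2 - eta) * INR #|U|)
                          then true else false)
   <= 1 * exp (- (1 + eta / 4) * INR m * ln (INR n / INR m)
               + (INR r * ln 2 + INR r * ln (2 * INR r) + 1) * INR m).
Proof.
move=> hr eta0 hm hU.
have Rr : 3 <= INR r by have := le_INR 3 r (elimT leP hr); simpl; lra.
rewrite /prob.
set P := fun k : nat => if Rle_dec (INR k) ((INR r - 2 - eta) * INR #|U|) then true else false.
set bad := #|[set f in pairings n r | _]|.
have -> : bad = #|[set f in pairings n r | P #|boundary f U|]| by [].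
set Pi := #|pairings n r|.
have hle : (#|[set f in pairings n r | P #|boundary f U|]| <= Pi)%N.
  by apply: subset_leq_card; apply/subsetP => f; rewrite inE => /andP[].
case: (posnP m) => [m0|m1].
  rewrite m0 Rmult_1_l.
  have -> : - (1 + eta / 4) * INR 0 * ln (INR n / INR 0) +
      (INR r * ln 2 + INR r * ln (2 * INR r) + 1) * INR 0 = 0 by rewrite /=; ring.
  by rewrite exp_0; apply: ratio_le1.
have Rm : 1 <= INR m by have := le_INR 1 m (elimT leP m1); simpl; lra.
have n4 : (4 * r * m <= n)%N.
  apply/leP; apply: INR_le; rewrite !mult_INR.
  have h4 : INR 4 = 4 by simpl; ring.
  rewrite h4.
  have := Rmult_le_compat_l (4 * INR r) _ _ ltac:(lra) hm.
  have -> : 4 * INR r * (/ (4 * INR r) * INR n) = INR n by field; lra.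
  lra.
have npos : 0 < INR n.
  have := le_INR _ _ (elimT leP n4); rewrite !mult_INR; simpl; nra.
set x := INR m / INR n.
have x0 : 0 <= x by apply: Rlt_le; apply: Rdiv_lt_0_compat; lra.
set c := exp (INR (m * r) * ln (2 * INR r) - (1 + eta / 4) * INR m * ln (INR n / INR m)).
have cpos : 0 < c by apply: exp_pos.
have cH : #|halfedge n r| = (n * r)%N by rewrite /halfedge card_prod !card_ord.
have main : INR #|[set f in pairings n r | P #|boundary f U|]|
    <= INR (2 ^ (m * r)) * (INR Pi * c) * (x + 1) ^ n.
  apply: (Rle_trans _ _ _ (le_INR _ _ (elimT leP (union_bound r U P)))).
  apply: CPart.outer_final.
  - by apply: Rmult_le_pos; [apply: pos_INR | lra].
  - exact: x0.
  - move=> B _.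
    have -> : (m * r = #|AU r U|)%N by rewrite card_AU hU.
    rewrite -card_powerset; apply: subset_leq_card; apply/subsetP => X.
    by rewrite !inE => /andP[].
  move=> B X PB XB.
  have hb : INR #|B| <= (INR r - 2 - eta) * INR m.
    by move: PB; rewrite /P hU; case: Rle_dec.
  move: XB; rewrite inE hU => /andP[XA hk1].
  have hk2 : (#|X| <= m * r)%N by rewrite -hU -card_AU; apply: subset_leq_card.
  have mb : (m + #|B| <= r * m)%N.
    apply/leP; apply: INR_le; rewrite plus_INR mult_INR; nra.
  have hs : (#|SB r U B| <= (m + #|B|) * r)%N.
    have -> : SB r U B = setX (U :|: B) [set: 'I_r] by apply/setP => h; rewrite !inE andbT.
    rewrite cardsX cardsT card_ord leq_mul2r -hU (leq_card_setU _ _).1 orbT //.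
  have hg := G_bound X (SB r U B).
  rewrite cH in hg.
  have := term_real eta0 hr m1 n4 hb hk1 hk2 (term_nat hr m1 n4 mb hk1 hk2 hs hg).
  by rewrite -/c -/x Rmult_assoc.
case: (posnP Pi) => [Pi0|Pipos].
  have -> : #|[set f in pairings n r | P #|boundary f U|]| = 0%N by move: hle; rewrite Pi0; lia.
  rewrite /= /Rdiv Rmult_0_l; apply: Rmult_le_pos; [lra | apply: Rlt_le; apply: exp_pos].
have PiR : 0 < INR Pi by apply: lt_0_INR; apply/ltP.
have hp : (x + 1) ^ n <= exp (INR m).
  have -> : INR m = INR n * x by rewrite /x; field; lra.
  rewrite -exp_pow'; apply: pow_incr; have := exp_ineq1_le x; lra.
have K0 : 0 <= INR (2 ^ (m * r)) by apply: pos_INR.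
apply: (Rle_trans _ (INR (2 ^ (m * r)) * c * exp (INR m))).
  rewrite /Rdiv; apply: (Rmult_le_reg_r (INR Pi)) => //.
  rewrite Rmult_assoc Rinv_l; last by lra.
  rewrite Rmult_1_r; apply: (Rle_trans _ _ _ main).
  have -> : INR (2 ^ (m * r)) * c * exp (INR m) * INR Pi
           = INR (2 ^ (m * r)) * (INR Pi * c) * exp (INR m) by ring.
  apply: Rmult_le_compat_l => //; apply: Rmult_le_pos; [lra|apply: Rmult_le_pos; lra].
rewrite INR_expn.
have -> : INR 2 = 2 by simpl; ring.
rewrite -(exp_ln (2 ^ (m * r))); last by apply: pow_lt; lra.
rewrite ln_pow; last by lra.
rewrite /c -!exp_plus Rmult_1_l; apply: Req_le; congr exp; rewrite mult_INR; ring.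
Qed.

Close Scope R_scope.
From Stdlib Require Import Reals.

Theorem lemma5 (r : nat) (hr : 3 <= r) :
  exists (C7 D : R) (eps5 : R -> R),
    (forall eta : R, (0 < eta)%R -> (0 < eps5 eta)%R) /\
    forall eta : R, (0 < eta)%R ->
      exists N : nat, forall n : nat, N <= n -> ~~ odd (r * n) ->
        forall (m : nat), (INR m <= eps5 eta * INR n)%R ->
        forall U : {set 'I_n}, #|U| = m ->
          (prob (fun f : {ffun halfedge n r -> halfedge n r} =>
                  if Rle_dec (INR #|boundary f U|) ((INR r - 2 - eta) * INR #|U|)
                  then true else false)
            <= C7 * exp (- (1 + eta / 4) * INR m * ln (INR n / INR m) + D * INR m))%R.
Proof.
have Rr : (3 <= INR r)%R by have := le_INR 3 r (elimT leP hr); simpl; lra.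
exists 1%R, (INR r * ln 2 + INR r * ln (2 * INR r) + 1)%R, (fun _ => / (4 * INR r))%R.
split; first by move=> eta _; apply: Rinv_0_lt_compat; lra.
move=> eta eta0; exists 0%N => n _ _ m hm U hU.
exact: lemma5_core.
Qed.
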